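(* Let $\Pi$ be the $3$-regular sinkless and sourceless orientation problem and let $k\ge0$ be an integer. Then, up to renaming of labels, $\mathcal{Q}^k(\Pi)$ has the following constraints. Here $[X\,Y]$ denotes a position that may hold any label from $\{X,Y\}$. - If $k=0$: node constraint $\mathsf B\,\mathsf C\,[\mathsf B\,\mathsf C]$; edge constraint $\mathsf B\,\mathsf C$. - If $k=1$: node constraint $\mathsf B\,\mathsf C\,\mathsf D$; edge constraint $[\mathsf B\,\mathsf D]\,[\mathsf C\,\mathsf D]$. - If $k\ge2$: the label set is $\{\mathsf B,\mathsf C\}\cup\{\mathsf A_i:1\le i\le k-1\}\cup\{\mathsf D_i:1\le i\le k\}$. - The node constraint consists of $\mathsf B\,\mathsf C\,\mathsf D_k$ and $\mathsf A_i\,\mathsf D_i\,\mathsf D_k$ for each $1\le i\le k-1$. - The edge constraint consists of all configurations in $[\mathsf B\,\mathsf D_1\,\dots\,\mathsf D_k]\,[\mathsf C\,\mathsf D_1\,\dots\,\mathsf D_k]$, together with $\mathsf A_i\,\mathsf D_j$ for each $1\le i<j\le k$.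
   Context: Here $\Delta=3$. A node-edge-checkable problem $\Pi=(\Sigma_\Pi,\mathcal{N}_\Pi,\mathcal{E}_\Pi)$ has a finite label set, a node constraint $\mathcal{N}_\Pi$ (a set of cardinality-$3$ multisets over $\Sigma_\Pi$) and an edge constraint $\mathcal{E}_\Pi$ (a set of cardinality-$2$ multisets). The sinkless and sourceless orientation problem has labels $\{\mathsf I,\mathsf O\}$. Its node configurations contain at least one $\mathsf I$ and at least one $\mathsf O$, and its only edge configuration is $\mathsf I\,\mathsf O$. Round elimination. $\mathrm{R}(\Pi)$ is defined as follows. - $\mathcal{E}_{\mathrm{R}(\Pi)}$ consists of the configurations $S_1S_2$ of nonempty subsets of $\Sigma_\Pi$ with $L_1L_2\in\mathcal{E}_\Pi$ for all $L_i\in S_i$ that are maximal. Maximal means no other such configuration $S'_1S'_2$ has $S_i\subseteq S'_{\rho(i)}$ for a permutation $\rho$. - $\Sigma_{\mathrm{R}(\Pi)}$ is the set of sets occurring there. - $\mathcal{N}_{\mathrm{R}(\Pi)}$ consists of the configurations over $\Sigma_{\mathrm{R}(\Pi)}$ admitting a choice in $\mathcal{N}_\Pi$. $\bar{\mathrm{R}}(\Pi)$ is defined dually. - $\mathcal{N}_{\bar{\mathrm{R}}(\Pi)}$ consists of the maximal configurations of nonempty subsets all of whose choices lie in $\mathcal{N}_\Pi$. - $\Sigma_{\bar{\mathrm{R}}(\Pi)}$ is the set of sets occurring there. - $\mathcal{E}_{\bar{\mathrm{R}}(\Pi)}$ consists of the configurations over $\Sigma_{\bar{\mathrm{R}}(\Pi)}$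 admitting a choice in $\mathcal{E}_\Pi$. $\mathcal{Q}=\bar{\mathrm{R}}\circ\mathrm{R}$, and $\mathcal{Q}^k$ is its $k$-fold iterate. *)

(* Defs.v *)
From HB Require Import structures.
From mathcomp Require Import all_boot.
Set Implicit Arguments. Unset Strict Implicit. Unset Printing Implicit Defensive.

(* A node-edge-checkable problem (Delta = 3) over a label universe T.
   plab  : the label set Sigma (as a predicate on T);
   pnode : node configurations, a configuration (multiset) being represented
           by any sequence listing its elements;
   pedge : edge configurations, likewise.
   Multisets are read via [cfg]: a sequence s is in the constraint iff it has
   the right cardinality and is a permutation of a listed sequence. *)
Record problem (T : Type) := Problem {
  plab  : T -> Prop;
  pnode : seq T -> Prop;
  pedge : seq T -> Prop }.

Definition cfg {T : eqType} (n : nat) (C : seq T -> Prop) (s : seq T) : Prop :=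
  size s = n /\ exists s', perm_eq s s' /\ C s'.

Definition inN {T : eqType} (P : problem T) (s : seq T) := cfg 3 (pnode P) s.
Definition inE {T : eqType} (P : problem T) (s : seq T) := cfg 2 (pedge P) s.
Definition all_lab {T : eqType} (P : problem T) (s : seq T) :=
  forall x, x \in s -> plab P x.

Section RoundElim.
Variable T : finType.

Definition nesub (P : problem T) (S : {set T}) :=
  S != set0 /\ forall x, x \in S -> plab P x.

Definition is_choice (l : seq T) (s : seq {set T}) :=
  all2 (fun (L : T) (S : {set T}) => L \in S) l s.

Definition dominated (s s' : seq {set T}) : Prop :=
  exists t, perm_eq t s' /\ all2 (fun a b : {set T} => a \subset b) s t.

Definition maximal (cand : seq {set T} -> Prop) (s : seq {set T}) : Prop :=
  cand s /\ forall s', cand s' -> dominated s s' -> perm_eq s s'.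

Definition R_cand (P : problem T) (s : seq {set T}) :=
  size s = 2 /\ (forall S, S \in s -> nesub P S) /\
  (forall l, is_choice l s -> inE P l).
Definition R_edge (P : problem T) := maximal (R_cand P).
Definition R_lab (P : problem T) (S : {set T}) :=
  exists s, R_edge P s /\ S \in s.
Definition R_node (P : problem T) (s : seq {set T}) :=
  size s = 3 /\ (forall S, S \in s -> R_lab P S) /\
  exists l, is_choice l s /\ inN P l.
Definition R (P : problem T) : problem {set T} :=
  Problem (R_lab P) (R_node P) (R_edge P).

Definition Rb_cand (P : problem T) (s : seq {set T}) :=
  size s = 3 /\ (forall S, S \in s -> nesub P S) /\
  (forall l, is_choice l s -> inN P l).
Definition Rb_node (P : problem T) := maximal (Rb_cand P).
Definition Rb_lab (P : problem T) (S : {set T}) :=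
  exists s, Rb_node P s /\ S \in s.
Definition Rb_edge (P : problem T) (s : seq {set T}) :=
  size s = 2 /\ (forall S, S \in s -> Rb_lab P S) /\
  exists l, is_choice l s /\ inE P l.
Definition Rbar (P : problem T) : problem {set T} :=
  Problem (Rb_lab P) (Rb_node P) (Rb_edge P).

End RoundElim.

Definition Qop (T : finType) (P : problem T) : problem {set {set T}} :=
  Rbar (R P).

Definition lI := false.
Definition lO := true.
Definition Pi0 : problem bool :=
  Problem (fun x => x = lI \/ x = lO)
          (fun s => size s = 3 /\ lI \in s /\ lO \in s)
          (fun s => s = [:: lI; lO]).

Fixpoint labT (k : nat) : finType :=
  if k is k'.+1 then ({set {set labT k'}} : finType) else (bool : finType).

Fixpoint Qk (k : nat) : problem (labT k) :=
  match k return problem (labT k) with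
  | 0 => Pi0
  | k'.+1 => Qop (Qk k')
  end.

(* "up to renaming of labels": a bijection between label sets preserving
   node and edge constraints (as sets of multisets). *)
Definition iso {T U : eqType} (P : problem T) (P' : problem U) : Prop :=
  exists f : T -> U,
    (forall x y, plab P x -> plab P y -> f x = f y -> x = y) /\
    (forall y, plab P' y <-> exists x, plab P x /\ f x = y) /\
    (forall s, inN P s <-> (all_lab P s /\ inN P' (map f s))) /\
    (forall t, inN P' t -> all_lab P' t) /\
    (forall s, inE P s <-> (all_lab P s /\ inE P' (map f s))) /\
    (forall t, inE P' t -> all_lab P' t).

Inductive tlab := TB | TC | TA of nat | TD of nat.
Definition tlab_eq_dec (x y : tlab) : {x = y} + {x <> y}.
Proof. decide equality; apply: (decP eqP). Defined.
HB.instance Definition _ := comparableMixin tlab_eq_dec.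

Definition target0 : problem tlab :=
  Problem (fun x => x = TB \/ x = TC)
          (fun s => s = [:: TB; TC; TB] \/ s = [:: TB; TC; TC])
          (fun s => s = [:: TB; TC]).

Definition target1 : problem tlab :=
  Problem (fun x => x = TB \/ x = TC \/ x = TD 1)
          (fun s => s = [:: TB; TC; TD 1])
          (fun s => exists x y, (x = TB \/ x = TD 1) /\ (y = TC \/ y = TD 1)
                                /\ s = [:: x; y]).

Definition isD (k : nat) (x : tlab) := exists j, 1 <= j <= k /\ x = TD j.

Definition targetk (k : nat) : problem tlab :=
  Problem (fun x => x = TB \/ x = TC \/ (exists i, 1 <= i <= k - 1 /\ x = TA i)
                    \/ isD k x)
          (fun s => s = [:: TB; TC; TD k] \/
                    exists i, 1 <= i <= k - 1 /\ s = [:: TA i; TD i; TD k])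
          (fun s => (exists x y, (x = TB \/ isD k x) /\ (y = TC \/ isD k y)
                                 /\ s = [:: x; y]) \/
                    exists i j, 1 <= i < j /\ j <= k /\ s = [:: TA i; TD j]).

Definition target (k : nat) : problem tlab :=
  match k with 0 => target0 | 1 => target1 | _ => targetk k end.

(* Main.v *)
From HB Require Import structures.
Require Import Defs.
From mathcomp Require Import all_boot zify.
From Stdlib Require Import ClassicalEpsilon Classical.
Set Implicit Arguments. Unset Strict Implicit. Unset Printing Implicit Defensive.

Definition pb (P : Prop) : bool := if excluded_middle_informative P then true else false.
Lemma pbP P : reflect P (pb P).
Proof. rewrite /pb; case: excluded_middle_informative => h; by constructor. Qed.

Lemma perm_cons_mid (T : eqType) (a : T) s s1 s2 :
  perm_eq (a :: s) (s1 ++ a :: s2) = perm_eq s (s1 ++ s2).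
Proof.
have h : perm_eq (s1 ++ a :: s2) (a :: s1 ++ s2).
  by apply/permP => p; rewrite /= !count_cat /=; lia.
by rewrite (permPr h) perm_cons.
Qed.

Lemma all2_size (A B : Type) (r : A -> B -> bool) s t : all2 r s t -> size s = size t.
Proof. by elim: s t => [|x s IH] [|y t] //= /andP [_ /IH ->]. Qed.

Lemma all2_catl (A B : Type) (r : A -> B -> bool) s1 s2 t1 t2 :
  size s1 = size t1 -> all2 r (s1 ++ s2) (t1 ++ t2) = all2 r s1 t1 && all2 r s2 t2.
Proof.
elim: s1 t1 => [|x s IH] [|y t] //= [e]. by rewrite IH // andbA.
Qed.

Lemma all2_perm (A B : eqType) (r : A -> B -> bool) s t s2 :
  all2 r s t -> perm_eq s s2 -> exists t2, perm_eq t t2 /\ all2 r s2 t2.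
Proof.
elim: s t s2 => [|a s IH] [|b t] s2 //=.
  by move=> _ /perm_size; case: s2 => // _; exists [::].
case/andP => rab hst pe.
have ains : a \in s2 by rewrite -(perm_mem pe) mem_head.
move: pe; case/splitPr: ains => s2a s2b pe.
rewrite perm_cons_mid in pe.
have [t2' [pt' a2]] := IH _ _ hst pe.
have sz := all2_size a2; rewrite size_cat in sz.
exists (take (size s2a) t2' ++ b :: drop (size s2a) t2'); split.
  by rewrite perm_cons_mid cat_take_drop.
rewrite all2_catl ?size_take; last by rewrite -sz; case: ltnP => //; lia.
rewrite /= rab /=.
rewrite -(cat_take_drop (size s2a) t2') all2_catl ?size_take in a2; last by rewrite -sz; case: ltnP => //; lia.
done.
Qed.

Lemma all2_flip (A B : Type) (r : A -> B -> bool) s t :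
  all2 r s t = all2 (fun b a => r a b) t s.
Proof. by elim: s t => [|x s IH] [|y t] //=; rewrite IH. Qed.

Lemma perm1E (T : eqType) (a b : T) : perm_eq [:: a] [:: b] -> a = b.
Proof. by move/perm_mem/(_ a); rewrite !inE eqxx => /esym/eqP. Qed.

Lemma perm2E (T : eqType) (a b : T) s :
  perm_eq [:: a; b] s -> s = [:: a; b] \/ s = [:: b; a].
Proof.
move=> pe; have := perm_size pe; case: s pe => [|x [|y [|z s]]] //= pe _.
have : a \in [:: x; y] by rewrite -(perm_mem pe) mem_head.
rewrite !inE => /orP [/eqP ax|/eqP ay].
  subst x; move: pe; rewrite perm_cons => /perm1E ->; by left.
subst y; move: pe; rewrite (perm_cons_mid a [:: b] [:: x] [::]) => /perm1E ->; by right.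
Qed.

Inductive or6 (P1 P2 P3 P4 P5 P6 : Prop) : Prop :=
  Or61 of P1 | Or62 of P2 | Or63 of P3 | Or64 of P4 | Or65 of P5 | Or66 of P6.

Lemma perm3E (T : eqType) (a b c : T) s :
  perm_eq [:: a; b; c] s ->
  or6 (s = [:: a; b; c]) (s = [:: a; c; b]) (s = [:: b; a; c]) (s = [:: b; c; a])
      (s = [:: c; a; b]) (s = [:: c; b; a]).
Proof.
move=> pe; have := perm_size pe; case: s pe => [|x [|y [|z [|w s]]]] //= pe _.
have : a \in [:: x; y; z] by rewrite -(perm_mem pe) mem_head.
rewrite !inE => /orP [/eqP ax|/orP [/eqP ay|/eqP az]].
- subst x; move: pe; rewrite perm_cons => /perm2E [[-> ->]|[-> ->]].
  by constructor 1. by constructor 2.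
- subst y; move: pe; rewrite (perm_cons_mid a [:: b; c] [:: x] [:: z]) /=.
  move=> /perm2E [[-> ->]|[-> ->]]. by constructor 3. by constructor 5.
- subst z; move: pe; rewrite (perm_cons_mid a [:: b; c] [:: x; y] [::]) /=.
  move=> /perm2E [[-> ->]|[-> ->]]. by constructor 4. by constructor 6.
Qed.

Lemma perm3_all (T : eqType) (a b c : T) :
  [/\ perm_eq [:: a; b; c] [:: a; c; b], perm_eq [:: a; b; c] [:: b; a; c],
      perm_eq [:: a; b; c] [:: b; c; a], perm_eq [:: a; b; c] [:: c; a; b]
    & perm_eq [:: a; b; c] [:: c; b; a]].
Proof. by split; apply/permP => p /=; lia. Qed.

Lemma perm2_swap (T : eqType) (a b : T) : perm_eq [:: a; b] [:: b; a].
Proof. by apply/permP => p /=; lia. Qed.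

Lemma cfg_perm (U : eqType) n (C : seq U -> Prop) s t :
  cfg n C s -> perm_eq s t -> cfg n C t.
Proof.
move=> [sz [s' [p c]]] pt; split; first by rewrite -(perm_size pt).
by exists s'; split => //; apply: perm_trans p; rewrite perm_sym.
Qed.

Lemma cfg_size (U : eqType) n (C : seq U -> Prop) s : cfg n C s -> size s = n.
Proof. by case. Qed.

Lemma cfg2_swap (U : eqType) (C : seq U -> Prop) a b :
  cfg 2 C [:: a; b] -> cfg 2 C [:: b; a].
Proof. move=> h; apply: cfg_perm h _; exact: perm2_swap. Qed.

Lemma cfg3_rot (U : eqType) (C : seq U -> Prop) a b c :
  cfg 3 C [:: a; b; c] -> cfg 3 C [:: b; c; a].
Proof. move=> h; apply: cfg_perm h _; by case: (perm3_all a b c). Qed.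

Lemma cfg3_swap12 (U : eqType) (C : seq U -> Prop) a b c :
  cfg 3 C [:: a; b; c] -> cfg 3 C [:: b; a; c].
Proof. move=> h; apply: cfg_perm h _; by case: (perm3_all a b c). Qed.

Lemma cfg3_swap23 (U : eqType) (C : seq U -> Prop) a b c :
  cfg 3 C [:: a; b; c] -> cfg 3 C [:: a; c; b].
Proof. move=> h; apply: cfg_perm h _; by case: (perm3_all a b c). Qed.

Lemma all_lab2 (U : eqType) (P : problem U) a b :
  all_lab P [:: a; b] <-> plab P a /\ plab P b.
Proof.
split; first by move=> h; split; apply: h; rewrite !inE eqxx ?orbT.
by case=> ha hb x; rewrite !inE => /orP [/eqP ->|/eqP ->].
Qed.

Lemma all_lab3 (U : eqType) (P : problem U) a b c :
  all_lab P [:: a; b; c] <-> [/\ plab P a, plab P b & plab P c].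
Proof.
split; first by move=> h; split; apply: h; rewrite !inE eqxx ?orbT.
by case=> ha hb hc x; rewrite !inE => /orP [/eqP ->|/orP [/eqP ->|/eqP ->]].
Qed.

Lemma psym (T : eqType) (s t : seq T) : perm_eq s t -> perm_eq t s.
Proof. by rewrite perm_sym. Qed.

Notation inEd := Defs.inE.

Section PermInv.
Variable T : finType.

Lemma is_choice_perm (l : seq T) (s s2 : seq {set T}) :
  is_choice l s -> perm_eq s s2 -> exists l2, perm_eq l l2 /\ is_choice l2 s2.
Proof.
rewrite /is_choice all2_flip => h p.
have [l2 [pl a]] := all2_perm h p.
by exists l2; split => //; rewrite all2_flip.
Qed.

Lemma R_cand_perm (P : problem T) s s2 : R_cand P s -> perm_eq s s2 -> R_cand P s2.
Proof.
move=> [sz [ne ch]] p; split; first by rewrite -(perm_size p).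
split; first by move=> S; rewrite -(perm_mem p); apply: ne.
move=> l hl; have [l2 [pl hl2]] := is_choice_perm hl (psym p).
apply: cfg_perm (ch _ hl2) _; by rewrite perm_sym.
Qed.

Lemma Rb_cand_perm (P : problem T) s s2 : Rb_cand P s -> perm_eq s s2 -> Rb_cand P s2.
Proof.
move=> [sz [ne ch]] p; split; first by rewrite -(perm_size p).
split; first by move=> S; rewrite -(perm_mem p); apply: ne.
move=> l hl; have [l2 [pl hl2]] := is_choice_perm hl (psym p).
apply: cfg_perm (ch _ hl2) _; by rewrite perm_sym.
Qed.

Definition perm_inv (C : seq {set T} -> Prop) :=
  forall s s2, C s -> perm_eq s s2 -> C s2.

Lemma maximal_perm C : perm_inv C -> perm_inv (maximal C).
Proof.
move=> Cp s s2 [Cs ms] p; split; first exact: Cp Cs p.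
move=> s' Cs' [t [pt a]].
have [t2 [pt2 a2]] := all2_perm a (psym p).
have : perm_eq s s' by apply: ms => //; exists t2; split => //; apply: perm_trans pt; rewrite perm_sym.
by move=> h; apply: perm_trans h; rewrite perm_sym.
Qed.

Lemma max_char C s : perm_inv C -> C s ->
  (forall t, C t -> all2 (fun a b : {set T} => a \subset b) s t -> t = s) -> maximal C s.
Proof.
move=> Cp Cs h; split => // s' Cs' [t [pt a]].
have Ct : C t by apply: Cp Cs' _; rewrite perm_sym.
by have e := h t Ct a; rewrite e in pt.
Qed.

Lemma max_dom C s s0 : maximal C s -> C s0 ->
  all2 (fun a b : {set T} => a \subset b) s s0 -> perm_eq s s0.
Proof. by move=> [_ m] C0 a; apply: m C0 _; exists s0; split. Qed.

Lemma inE_R (P : problem T) s : inEd (R P) s <-> R_edge P s.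
Proof.
split.
  move=> [sz [s' [p e]]]; apply: (maximal_perm (@R_cand_perm P)) e _; by rewrite perm_sym.
move=> e; split; first by case: e => [[sz _] _].
by exists s; split.
Qed.

Lemma inN_Rb (P : problem T) s : inN (Rbar P) s <-> Rb_node P s.
Proof.
split.
  move=> [sz [s' [p e]]]; apply: (maximal_perm (@Rb_cand_perm P)) e _; by rewrite perm_sym.
move=> e; split; first by case: e => [[sz _] _].
by exists s; split.
Qed.

Lemma R_node_perm (P : problem T) s s2 : R_node P s -> perm_eq s s2 -> R_node P s2.
Proof.
move=> [sz [lb [l [hl nl]]]] p; split; first by rewrite -(perm_size p).
split; first by move=> S; rewrite -(perm_mem p); apply: lb.
have [l2 [pl hl2]] := is_choice_perm hl p.
by exists l2; split => //; apply: cfg_perm nl pl.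
Qed.

Lemma Rb_edge_perm (P : problem T) s s2 : Rb_edge P s -> perm_eq s s2 -> Rb_edge P s2.
Proof.
move=> [sz [lb [l [hl nl]]]] p; split; first by rewrite -(perm_size p).
split; first by move=> S; rewrite -(perm_mem p); apply: lb.
have [l2 [pl hl2]] := is_choice_perm hl p.
by exists l2; split => //; apply: cfg_perm nl pl.
Qed.

Lemma inN_R (P : problem T) s : inN (R P) s <-> R_node P s.
Proof.
split.
  move=> [sz [s' [p e]]]; apply: R_node_perm e _; by rewrite perm_sym.
move=> e; split; first by case: e.
by exists s; split.
Qed.

Lemma inE_Rb (P : problem T) s : inEd (Rbar P) s <-> Rb_edge P s.
Proof.
split.
  move=> [sz [s' [p e]]]; apply: Rb_edge_perm e _; by rewrite perm_sym.
move=> e; split; first by case: e.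
by exists s; split.
Qed.

Lemma is_choice2 (l : seq T) S1 S2 :
  is_choice l [:: S1; S2] <-> exists x y, [/\ l = [:: x; y], x \in S1 & y \in S2].
Proof.
split.
  by case: l => [|x [|y [|z l]]]; rewrite /is_choice /= ?andbF // => /and3P [h1 h2 _]; exists x, y.
by case=> x [y [-> h1 h2]]; rewrite /is_choice /= h1 h2.
Qed.

Lemma is_choice3 (l : seq T) S1 S2 S3 :
  is_choice l [:: S1; S2; S3] <->
  exists x y z, [/\ l = [:: x; y; z], x \in S1, y \in S2 & z \in S3].
Proof.
split.
  by case: l => [|x [|y [|z [|w l]]]]; rewrite /is_choice /= ?andbF // => /and4P [h1 h2 h3 _]; exists x, y, z.
by case=> x [y [z [-> h1 h2 h3]]]; rewrite /is_choice /= h1 h2 h3.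
Qed.

End PermInv.

Section Gen.
Variables (T : finType) (U W : eqType) (P : problem T) (P' : problem U) (Q : problem W).
Variables (f : T -> U) (sg : W -> pred U) (w0 : W).
Hypothesis Hinj : forall x y, plab P x -> plab P y -> f x = f y -> x = y.
Hypothesis Hlab : forall y, plab P' y <-> exists x, plab P x /\ f x = y.
Hypothesis HN : forall s, inN P s <-> all_lab P s /\ inN P' (map f s).
Hypothesis HE : forall s, inEd P s <-> all_lab P s /\ inEd P' (map f s).
Hypothesis HQN : forall t, inN Q t -> all_lab Q t.
Hypothesis HQE : forall t, inEd Q t -> all_lab Q t.
Hypothesis Hsg_ne : forall w, plab Q w -> exists u, sg w u.
Hypothesis Hsg_lab : forall w u, plab Q w -> sg w u -> plab P' u.
Hypothesis Hsg_inj : forall w w', plab Q w -> plab Q w' -> sg w =1 sg w' -> w = w'.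

Definition pre w : {set T} := [set x | pb (plab P x) && sg w (f x)].

Lemma preP w x : reflect (plab P x /\ sg w (f x)) (x \in pre w).
Proof.
rewrite inE; apply: (iffP andP) => [[/pbP h1 h2]|[h1 h2]]; split => //; exact/pbP.
Qed.

Lemma lab_f x : plab P x -> plab P' (f x).
Proof. by move=> h; apply/Hlab; exists x. Qed.

Lemma pre_ex w u : plab Q w -> sg w u -> exists2 x, x \in pre w & f x = u.
Proof.
move=> lw su; have /Hlab [x [lx fx]] := Hsg_lab lw su.
by exists x => //; apply/preP; rewrite fx.
Qed.

Lemma pre_inj w w' : plab Q w -> plab Q w' -> pre w = pre w' -> w = w'.
Proof.
move=> lw lw' e; apply: Hsg_inj => // u; apply/idP/idP => h.
  have [x xin fx] := pre_ex lw h; move: xin; rewrite e => /preP [_]; by rewrite fx.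
have [x xin fx] := pre_ex lw' h; move: xin; rewrite -e => /preP [_]; by rewrite fx.
Qed.

Lemma pre_nesub w : plab Q w -> nesub P (pre w).
Proof.
move=> lw; split; last by move=> x /preP [].
have [u su] := Hsg_ne lw; have [x xin _] := pre_ex lw su.
by apply/set0Pn; exists x.
Qed.

Definition F (S : {set T}) : W :=
  epsilon (inhabits w0) (fun w => plab Q w /\ S = pre w).

Lemma F_pre w : plab Q w -> F (pre w) = w.
Proof.
move=> lw.
have [l' e] := epsilon_spec (inhabits w0) (fun w' => plab Q w' /\ pre w = pre w')
   (ex_intro _ w (conj lw erefl)).
by apply: pre_inj.
Qed.

Lemma choice_lab (S : {set T}) x : nesub P S -> x \in S -> plab P x.
Proof. by move=> [_ h] /h. Qed.

Lemma nesub_ex (S : {set T}) : nesub P S -> exists x, x \in S.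
Proof. by move=> [/set0Pn [x h] _]; exists x. Qed.

Section GR.
Hypothesis HQNchar : forall w1 w2 w3, plab Q w1 -> plab Q w2 -> plab Q w3 ->
  (inN Q [:: w1; w2; w3] <->
   exists u1 u2 u3, [/\ sg w1 u1, sg w2 u2, sg w3 u3 & inN P' [:: u1; u2; u3]]).
Hypothesis HQEcand : forall w1 w2, inEd Q [:: w1; w2] ->
  forall a b, sg w1 a -> sg w2 b -> inEd P' [:: a; b].
Hypothesis HQEcompl : forall w1 w2, inEd Q [:: w1; w2] -> forall u, plab P' u ->
  (forall a, sg w1 a -> inEd P' [:: a; u]) -> sg w2 u.
Hypothesis HQEdom : forall A B : U -> Prop, (exists a, A a) -> (exists b, B b) ->
  (forall a, A a -> plab P' a) -> (forall b, B b -> plab P' b) ->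
  (forall a b, A a -> B b -> inEd P' [:: a; b]) ->
  exists w1 w2, [/\ inEd Q [:: w1; w2], (forall a, A a -> sg w1 a) & (forall b, B b -> sg w2 b)].
Hypothesis HQEcover : forall w, plab Q w -> exists w', inEd Q [:: w; w'].

Lemma QE_lab w1 w2 : inEd Q [:: w1; w2] -> plab Q w1 /\ plab Q w2.
Proof. by move/HQE/all_lab2. Qed.

Lemma cand_pre w1 w2 : inEd Q [:: w1; w2] -> R_cand P [:: pre w1; pre w2].
Proof.
move=> E; have [l1 l2] := QE_lab E.
split => //; split.
  by move=> S; rewrite !inE => /orP [/eqP ->|/eqP ->]; apply: pre_nesub.
move=> l /is_choice2 [x [y [-> /preP [lx sx] /preP [ly sy]]]].
apply/HE; split; first by apply/all_lab2.
exact: HQEcand E _ _ sx sy.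
Qed.

Lemma edge_pre_max w1 w2 : inEd Q [:: w1; w2] -> R_edge P [:: pre w1; pre w2].
Proof.
move=> E; have [l1 l2] := QE_lab E.
have E' : inEd Q [:: w2; w1] by apply: cfg2_swap.
apply: max_char; [exact: (@R_cand_perm _ P)|exact: cand_pre|].
move=> t Ct; have := Ct => [[sz [ne ch]]].
case: t sz ne ch Ct => [|T1 [|T2 [|T3 t]]] //= _ ne ch Ct.
case/and3P => s1 s2 _.
have n1 : nesub P T1 by apply: ne; rewrite mem_head.
have n2 : nesub P T2 by apply: ne; rewrite !inE eqxx orbT.
have e2 : T2 = pre w2.
  apply/eqP; rewrite eqEsubset s2 andbT; apply/subsetP => y yT2.
  have ly := choice_lab n2 yT2.
  apply/preP; split => //; apply: (HQEcompl E (lab_f ly)) => a sa.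
  have [x xin <-] := pre_ex l1 sa.
  have : inEd P [:: x; y] by apply: ch; apply/is_choice2; exists x, y; split => //; apply: (subsetP s1).
  by case/HE.
have e1 : T1 = pre w1.
  apply/eqP; rewrite eqEsubset s1 andbT; apply/subsetP => x xT1.
  have lx := choice_lab n1 xT1.
  apply/preP; split => //; apply: (HQEcompl E' (lab_f lx)) => a sa.
  have [y yin <-] := pre_ex l2 sa.
  have : inEd P [:: x; y] by apply: ch; apply/is_choice2; exists x, y; split => //; rewrite e2.
  by move/cfg2_swap/HE => [].
by rewrite e1 e2.
Qed.

Lemma R_edge_char s : R_edge P s <-> exists w1 w2, inEd Q [:: w1; w2] /\ s = [:: pre w1; pre w2].
Proof.
split; last by case=> w1 [w2 [E ->]]; apply: edge_pre_max.
move=> M; have := M => [[[sz [ne ch]] _]].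
case: s sz ne ch M => [|S1 [|S2 [|S3 s]]] //= _ ne ch M.
have n1 : nesub P S1 by apply: ne; rewrite mem_head.
have n2 : nesub P S2 by apply: ne; rewrite !inE eqxx orbT.
pose A u := exists2 x, x \in S1 & f x = u.
pose B u := exists2 x, x \in S2 & f x = u.
have [w1 [w2 [E sA sB]]] : exists w1 w2, [/\ inEd Q [:: w1; w2], (forall a, A a -> sg w1 a) & (forall b, B b -> sg w2 b)].
  apply: HQEdom.
  - by have [x xin] := nesub_ex n1; exists (f x), x.
  - by have [x xin] := nesub_ex n2; exists (f x), x.
  - by move=> a [x xin <-]; apply/lab_f/(choice_lab n1).
  - by move=> a [x xin <-]; apply/lab_f/(choice_lab n2).
  - move=> a b [x xin <-] [y yin <-].
    have : inEd P [:: x; y] by apply: ch; apply/is_choice2; exists x, y.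
    by case/HE.
have sub1 : S1 \subset pre w1.
  apply/subsetP => x xin; apply/preP; split; first exact: choice_lab n1 xin.
  by apply: sA; exists x.
have sub2 : S2 \subset pre w2.
  apply/subsetP => x xin; apply/preP; split; first exact: choice_lab n2 xin.
  by apply: sB; exists x.
have := max_dom M (cand_pre E); rewrite /= sub1 sub2 => /(_ isT).
case/perm2E => [[<- <-]|[<- <-]].
  by exists w1, w2.
by exists w2, w1; split => //; apply: cfg2_swap.
Qed.

Lemma R_lab_char S : R_lab P S <-> exists2 w, plab Q w & S = pre w.
Proof.
split.
  case=> s [/R_edge_char [w1 [w2 [E ->]]]]; have [l1 l2] := QE_lab E.
  by rewrite !inE => /orP [/eqP ->|/eqP ->]; [exists w1|exists w2].
case=> w lw ->; have [w' E] := HQEcover lw.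
by exists [:: pre w; pre w']; split; [apply: edge_pre_max|rewrite mem_head].
Qed.

Lemma Rnode_pre w1 w2 w3 : plab Q w1 -> plab Q w2 -> plab Q w3 ->
  (R_node P [:: pre w1; pre w2; pre w3] <-> inN Q [:: w1; w2; w3]).
Proof.
move=> l1 l2 l3; rewrite HQNchar //; split.
  case=> _ [_ [l [/is_choice3 [x [y [z [-> xi yi zi]]]] nl]]].
  move: xi yi zi => /preP [lx sx] /preP [ly sy] /preP [lz sz].
  by exists (f x), (f y), (f z); split => //; case/HN: nl.
case=> u1 [u2 [u3 [s1 s2 s3 nu]]].
have [x xi ?] := pre_ex l1 s1; have [y yi ?] := pre_ex l2 s2; have [z zi ?] := pre_ex l3 s3; subst.
split => //; split.
  move=> S; rewrite !inE => /orP [/eqP ->|/orP [/eqP ->|/eqP ->]]; apply/R_lab_char; eauto.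
exists [:: x; y; z]; split; first by apply/is_choice3; exists x, y, z.
apply/HN; split => //.
move: xi yi zi => /preP [lx _] /preP [ly _] /preP [lz _]; exact/all_lab3.
Qed.

Lemma genR : iso (R P) Q.
Proof.
exists F; split.
  move=> S1 S2 /R_lab_char [w1 l1 ->] /R_lab_char [w2 l2 ->].
  by rewrite !F_pre // => ->.
split.
  move=> y; split.
    by move=> ly; exists (pre y); split; [apply/R_lab_char; exists y|apply: F_pre].
  by case=> S [/R_lab_char [w lw ->]]; rewrite F_pre // => <-.
split.
  move=> s; rewrite inN_R; split.
    move=> Rn; have := Rn => [[sz [lb _]]].
    case: s sz lb Rn => [|S1 [|S2 [|S3 [|S4 s]]]] //= _ lb Rn.
    have [w1 l1 e1] : exists2 w, plab Q w & S1 = pre w by apply/R_lab_char/lb; rewrite !inE eqxx.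
    have [w2 l2 e2] : exists2 w, plab Q w & S2 = pre w by apply/R_lab_char/lb; rewrite !inE eqxx ?orbT.
    have [w3 l3 e3] : exists2 w, plab Q w & S3 = pre w by apply/R_lab_char/lb; rewrite !inE eqxx ?orbT.
    subst; split; first by [].
    by rewrite !F_pre //; apply/Rnode_pre.
  case=> lb nq; have := cfg_size nq; rewrite size_map.
  case: s lb nq => [|S1 [|S2 [|S3 [|S4 s]]]] //= lb nq _.
  have [w1 l1 e1] : exists2 w, plab Q w & S1 = pre w by apply/R_lab_char/lb; rewrite !inE eqxx.
  have [w2 l2 e2] : exists2 w, plab Q w & S2 = pre w by apply/R_lab_char/lb; rewrite !inE eqxx ?orbT.
  have [w3 l3 e3] : exists2 w, plab Q w & S3 = pre w by apply/R_lab_char/lb; rewrite !inE eqxx ?orbT.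
  subst; move: nq; rewrite !F_pre // => nq; by apply/Rnode_pre.
split; first exact: HQN.
split; last exact: HQE.
move=> s; rewrite inE_R; split.
  case/R_edge_char => w1 [w2 [E ->]]; have [l1 l2] := QE_lab E.
  split; last by rewrite /= !F_pre.
  by apply/all_lab2; split; apply/R_lab_char; eauto.
case=> lb nq; have := cfg_size nq; rewrite size_map.
case: s lb nq => [|S1 [|S2 [|S3 s]]] //= lb nq _.
have [w1 l1 e1] : exists2 w, plab Q w & S1 = pre w by apply/R_lab_char/lb; rewrite !inE eqxx.
have [w2 l2 e2] : exists2 w, plab Q w & S2 = pre w by apply/R_lab_char/lb; rewrite !inE eqxx ?orbT.
subst; move: nq; rewrite !F_pre // => nq.
by apply/R_edge_char; exists w1, w2.
Qed.

End GR.

Section GRb.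
Hypothesis HQEchar : forall w1 w2, plab Q w1 -> plab Q w2 ->
  (inEd Q [:: w1; w2] <-> exists u1 u2, [/\ sg w1 u1, sg w2 u2 & inEd P' [:: u1; u2]]).
Hypothesis HQNcand : forall w1 w2 w3, inN Q [:: w1; w2; w3] ->
  forall a b c, sg w1 a -> sg w2 b -> sg w3 c -> inN P' [:: a; b; c].
Hypothesis HQNcompl : forall w1 w2 w3, inN Q [:: w1; w2; w3] -> forall u, plab P' u ->
  (forall a b, sg w1 a -> sg w2 b -> inN P' [:: a; b; u]) -> sg w3 u.
Hypothesis HQNdom : forall A B C : U -> Prop, (exists a, A a) -> (exists b, B b) -> (exists c, C c) ->
  (forall a, A a -> plab P' a) -> (forall b, B b -> plab P' b) -> (forall c, C c -> plab P' c) ->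
  (forall a b c, A a -> B b -> C c -> inN P' [:: a; b; c]) ->
  exists w1 w2 w3, [/\ inN Q [:: w1; w2; w3], (forall a, A a -> sg w1 a),
                       (forall b, B b -> sg w2 b) & (forall c, C c -> sg w3 c)].
Hypothesis HQNcover : forall w, plab Q w -> exists w2 w3, inN Q [:: w; w2; w3].

Lemma QN_lab w1 w2 w3 : inN Q [:: w1; w2; w3] -> [/\ plab Q w1, plab Q w2 & plab Q w3].
Proof. by move/HQN/all_lab3. Qed.

Lemma candb_pre w1 w2 w3 : inN Q [:: w1; w2; w3] -> Rb_cand P [:: pre w1; pre w2; pre w3].
Proof.
move=> E; have [l1 l2 l3] := QN_lab E.
split => //; split.
  by move=> S; rewrite !inE => /orP [/eqP ->|/orP [/eqP ->|/eqP ->]]; apply: pre_nesub.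
move=> l /is_choice3 [x [y [z [-> /preP [lx sx] /preP [ly sy] /preP [lz sz]]]]].
apply/HN; split; first by apply/all_lab3.
exact: HQNcand E _ _ _ sx sy sz.
Qed.

Lemma compl3 w1 w2 w3 (T1 T2 T3 : {set T}) :
  inN Q [:: w1; w2; w3] -> pre w1 \subset T1 -> pre w2 \subset T2 -> nesub P T3 ->
  (forall x y z, x \in T1 -> y \in T2 -> z \in T3 -> inN P [:: x; y; z]) ->
  T3 \subset pre w3.
Proof.
move=> E s1 s2 n3 ch; have [l1 l2 l3] := QN_lab E.
apply/subsetP => z zT3; have lz := choice_lab n3 zT3.
apply/preP; split => //; apply: (HQNcompl E (lab_f lz)) => a b sa sb.
have [x xin <-] := pre_ex l1 sa; have [y yin <-] := pre_ex l2 sb.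
have : inN P [:: x; y; z] by apply: ch; [exact: (subsetP s1)|exact: (subsetP s2)|exact: zT3].
by case/HN.
Qed.

Lemma node_pre_max w1 w2 w3 : inN Q [:: w1; w2; w3] -> Rb_node P [:: pre w1; pre w2; pre w3].
Proof.
move=> E; have [l1 l2 l3] := QN_lab E.
have E2 : inN Q [:: w2; w3; w1] by apply: cfg3_rot.
have E3 : inN Q [:: w3; w1; w2] by apply: cfg3_rot.
apply: max_char; [exact: (@Rb_cand_perm _ P)|exact: candb_pre|].
move=> t Ct; have := Ct => [[sz [ne ch]]].
case: t sz ne ch Ct => [|T1 [|T2 [|T3 [|T4 t]]]] //= _ ne ch Ct.
case/and4P => s1 s2 s3 _.
have n1 : nesub P T1 by apply: ne; rewrite mem_head.
have n2 : nesub P T2 by apply: ne; rewrite !inE eqxx ?orbT.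
have n3 : nesub P T3 by apply: ne; rewrite !inE eqxx ?orbT.
have chx : forall x y z, x \in T1 -> y \in T2 -> z \in T3 -> inN P [:: x; y; z].
  by move=> x y z hx hy hz; apply: ch; apply/is_choice3; exists x, y, z.
have e3 : T3 = pre w3 by apply/eqP; rewrite eqEsubset s3 andbT; apply: compl3 E s1 s2 n3 chx.
have e1 : T1 = pre w1.
  apply/eqP; rewrite eqEsubset s1 andbT; apply: compl3 E2 s2 s3 n1 _.
  by move=> y z x hy hz hx; apply: cfg3_rot; apply: chx.
have e2 : T2 = pre w2.
  apply/eqP; rewrite eqEsubset s2 andbT; apply: compl3 E3 s3 s1 n2 _.
  by move=> z x y hz hx hy; apply: cfg3_rot; apply: cfg3_rot; apply: chx.
by rewrite e1 e2 e3.
Qed.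

Lemma Rb_node_char s : Rb_node P s <->
  exists w1 w2 w3, inN Q [:: w1; w2; w3] /\ s = [:: pre w1; pre w2; pre w3].
Proof.
split; last by case=> w1 [w2 [w3 [E ->]]]; apply: node_pre_max.
move=> M; have := M => [[[sz [ne ch]] _]].
case: s sz ne ch M => [|S1 [|S2 [|S3 [|S4 s]]]] //= _ ne ch M.
have n1 : nesub P S1 by apply: ne; rewrite mem_head.
have n2 : nesub P S2 by apply: ne; rewrite !inE eqxx ?orbT.
have n3 : nesub P S3 by apply: ne; rewrite !inE eqxx ?orbT.
pose A u := exists2 x, x \in S1 & f x = u.
pose B u := exists2 x, x \in S2 & f x = u.
pose C u := exists2 x, x \in S3 & f x = u.
have [w1 [w2 [w3 [E sA sB sC]]]] : exists w1 w2 w3, [/\ inN Q [:: w1; w2; w3], (forall a, A a -> sg w1 a),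
                       (forall b, B b -> sg w2 b) & (forall c, C c -> sg w3 c)].
  apply: HQNdom.
  - by have [x xin] := nesub_ex n1; exists (f x), x.
  - by have [x xin] := nesub_ex n2; exists (f x), x.
  - by have [x xin] := nesub_ex n3; exists (f x), x.
  - by move=> a [x xin <-]; apply/lab_f/(choice_lab n1).
  - by move=> a [x xin <-]; apply/lab_f/(choice_lab n2).
  - by move=> a [x xin <-]; apply/lab_f/(choice_lab n3).
  - move=> a b c [x xin <-] [y yin <-] [z zin <-].
    have : inN P [:: x; y; z] by apply: ch; apply/is_choice3; exists x, y, z.
    by case/HN.
have sub1 : S1 \subset pre w1.
  apply/subsetP => x xin; apply/preP; split; first exact: choice_lab n1 xin.
  by apply: sA; exists x.
have sub2 : S2 \subset pre w2.
  apply/subsetP => x xin; apply/preP; split; first exact: choice_lab n2 xin.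
  by apply: sB; exists x.
have sub3 : S3 \subset pre w3.
  apply/subsetP => x xin; apply/preP; split; first exact: choice_lab n3 xin.
  by apply: sC; exists x.
have := max_dom M (candb_pre E); rewrite /= sub1 sub2 sub3 => /(_ isT).
have E2 : inN Q [:: w2; w3; w1] by apply: cfg3_rot.
have E3 : inN Q [:: w3; w1; w2] by apply: cfg3_rot.
case/perm3E => -[<- <- <-].
- by exists w1, w2, w3.
- by exists w1, w3, w2; split => //; apply: cfg3_swap23.
- by exists w2, w1, w3; split => //; apply: cfg3_swap12.
- by exists w3, w1, w2.
- by exists w2, w3, w1.
- by exists w3, w2, w1; split => //; apply: cfg3_swap12.
Qed.

Lemma Rb_lab_char S : Rb_lab P S <-> exists2 w, plab Q w & S = pre w.
Proof.
split.
  case=> s [/Rb_node_char [w1 [w2 [w3 [E ->]]]]]; have [l1 l2 l3] := QN_lab E.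
  by rewrite !inE => /orP [/eqP ->|/orP [/eqP ->|/eqP ->]]; [exists w1|exists w2|exists w3].
case=> w lw ->; have [w2 [w3 E]] := HQNcover lw.
by exists [:: pre w; pre w2; pre w3]; split; [apply: node_pre_max|rewrite mem_head].
Qed.

Lemma Rbedge_pre w1 w2 : plab Q w1 -> plab Q w2 ->
  (Rb_edge P [:: pre w1; pre w2] <-> inEd Q [:: w1; w2]).
Proof.
move=> l1 l2; rewrite HQEchar //; split.
  case=> _ [_ [l [/is_choice2 [x [y [-> xi yi]]] nl]]].
  move: xi yi => /preP [lx sx] /preP [ly sy].
  by exists (f x), (f y); split => //; case/HE: nl.
case=> u1 [u2 [s1 s2 nu]].
have [x xi ?] := pre_ex l1 s1; have [y yi ?] := pre_ex l2 s2; subst.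
split => //; split.
  move=> S; rewrite !inE => /orP [/eqP ->|/eqP ->]; apply/Rb_lab_char; eauto.
exists [:: x; y]; split; first by apply/is_choice2; exists x, y.
apply/HE; split => //.
move: xi yi => /preP [lx _] /preP [ly _]; exact/all_lab2.
Qed.

Lemma genRb : iso (Rbar P) Q.
Proof.
exists F; split.
  move=> S1 S2 /Rb_lab_char [w1 l1 ->] /Rb_lab_char [w2 l2 ->].
  by rewrite !F_pre // => ->.
split.
  move=> y; split.
    by move=> ly; exists (pre y); split; [apply/Rb_lab_char; exists y|apply: F_pre].
  by case=> S [/Rb_lab_char [w lw ->]]; rewrite F_pre // => <-.
split.
  move=> s; rewrite inN_Rb; split.
    case/Rb_node_char => w1 [w2 [w3 [E ->]]]; have [l1 l2 l3] := QN_lab E.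
    split; last by rewrite /= !F_pre.
    by apply/all_lab3; split; apply/Rb_lab_char; eauto.
  case=> lb nq; have := cfg_size nq; rewrite size_map.
  case: s lb nq => [|S1 [|S2 [|S3 [|S4 s]]]] //= lb nq _.
  have [w1 l1 e1] : exists2 w, plab Q w & S1 = pre w by apply/Rb_lab_char/lb; rewrite !inE eqxx.
  have [w2 l2 e2] : exists2 w, plab Q w & S2 = pre w by apply/Rb_lab_char/lb; rewrite !inE eqxx ?orbT.
  have [w3 l3 e3] : exists2 w, plab Q w & S3 = pre w by apply/Rb_lab_char/lb; rewrite !inE eqxx ?orbT.
  subst; move: nq; rewrite !F_pre // => nq.
  by apply/Rb_node_char; exists w1, w2, w3.
split; first exact: HQN.
split; last exact: HQE.
move=> s; rewrite inE_Rb; split.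
  move=> Rn; have := Rn => [[sz [lb _]]].
  case: s sz lb Rn => [|S1 [|S2 [|S3 s]]] //= _ lb Rn.
  have [w1 l1 e1] : exists2 w, plab Q w & S1 = pre w by apply/Rb_lab_char/lb; rewrite !inE eqxx.
  have [w2 l2 e2] : exists2 w, plab Q w & S2 = pre w by apply/Rb_lab_char/lb; rewrite !inE eqxx ?orbT.
  subst; split; first by [].
  by rewrite !F_pre //; apply/Rbedge_pre.
case=> lb nq; have := cfg_size nq; rewrite size_map.
case: s lb nq => [|S1 [|S2 [|S3 s]]] //= lb nq _.
have [w1 l1 e1] : exists2 w, plab Q w & S1 = pre w by apply/Rb_lab_char/lb; rewrite !inE eqxx.
have [w2 l2 e2] : exists2 w, plab Q w & S2 = pre w by apply/Rb_lab_char/lb; rewrite !inE eqxx ?orbT.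
subst; move: nq; rewrite !F_pre // => nq; by apply/Rbedge_pre.
Qed.

End GRb.
End Gen.

Lemma cfg2_char (U : eqType) (C : seq U -> Prop) (g : U -> U -> bool) :
  (forall a b, C [:: a; b] <-> g a b) ->
  forall a b, cfg 2 C [:: a; b] <-> g a b || g b a.
Proof.
move=> h a b; split.
  case=> _ [s' [p c]]; case/perm2E: p c => -> /h ->; by rewrite ?orbT.
case/orP => hg; split => //.
  by exists [:: a; b]; split => //; apply/h.
by exists [:: b; a]; split; [exact: perm2_swap|apply/h].
Qed.

Lemma cfg3_char (U : eqType) (C : seq U -> Prop) (g : U -> U -> U -> bool) :
  (forall a b c, C [:: a; b; c] <-> g a b c) ->
  forall a b c, cfg 3 C [:: a; b; c] <->
    [|| g a b c, g a c b, g b a c, g b c a, g c a b | g c b a].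
Proof.
move=> h a b c; split.
  case=> _ [s' [p cc]]; case/perm3E: p cc => -> /h ->; by rewrite ?orbT.
have [p1 p2 p3 p4 p5] := perm3_all a b c.
case/orP => [hg|/orP [hg|/orP [hg|/orP [hg|/orP [hg|hg]]]]]; split => //.
- by exists [:: a; b; c]; split => //; apply/h.
- by exists [:: a; c; b]; split => //; apply/h.
- by exists [:: b; a; c]; split => //; apply/h.
- by exists [:: b; c; a]; split => //; apply/h.
- by exists [:: c; a; b]; split => //; apply/h.
- by exists [:: c; b; a]; split => //; apply/h.
Qed.

Definition isDb (k : nat) (t : tlab) := if t is TD j then (0 < j) && (j <= k) else false.
Definition tlabb (k : nat) (t : tlab) :=
  match t with TB | TC => true | TA i => (0 < i) && (i < k) | TD j => (0 < j) && (j <= k) end.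

Lemma targetk_lab k t : plab (targetk k) t <-> tlabb k t.
Proof.
rewrite /=; split.
  case=> [->|[->|[[i [hi ->]]|[j [hj ->]]]]] //=; lia.
case: t => [||i|j] /= h; [by left|by right; left|right; right; left|right; right; right].
  by exists i; split => //; lia.
by exists j; split => //; lia.
Qed.

Definition isB (t : tlab) := if t is TB then true else false.
Definition isC (t : tlab) := if t is TC then true else false.
Definition isDk (k : nat) (t : tlab) := if t is TD j then j == k else false.

Definition tNx (k : nat) (a b c : tlab) : bool :=
  [&& isB a, isC b & isDk k c] ||
  (match a, b with TA i, TD j => (i == j) && (0 < i) && (i < k) | _, _ => false end) && isDk k c.

Definition tN k a b c := [|| tNx k a b c, tNx k a c b, tNx k b a c, tNx k b c a, tNx k c a b | tNx k c b a].

Lemma targetk_node k a b c : inN (targetk k) [:: a; b; c] <-> tN k a b c.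
Proof.
apply: cfg3_char => {}a {}b {}c /=; split.
  case=> [[-> -> ->]|[i [hi [-> -> ->]]]]; rewrite /tNx /= ?eqxx //=; lia.
rewrite /tNx; case/orP.
  case: a => //; case: b => //; case: c => // j /and3P [_ _ /eqP ->]; by left.
case: a => // i; case: b => // j; case: c => [||l|l] //=; rewrite ?andbF // => /andP [h /eqP ->]; right; exists i.
split; first lia. by have -> : j = i by lia.
Qed.

Definition tEx (k : nat) (a b : tlab) : bool :=
  (isB a || isDb k a) && (isC b || isDb k b) ||
  (match a, b with TA i, TD j => (0 < i) && (i < j) && (j <= k) | _, _ => false end).

Definition tE k a b := tEx k a b || tEx k b a.

Lemma tEC k a b : tE k a b = tE k b a.
Proof. by rewrite /tE orbC. Qed.

Lemma isDP k t : isD k t <-> isDb k t.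
Proof.
split; first by case=> j [h ->] /=.
by case: t => // j h; exists j; split.
Qed.

Lemma targetk_edge k a b : inEd (targetk k) [:: a; b] <-> tE k a b.
Proof.
apply: cfg2_char => {}a {}b /=; split.
  case=> [[x [y [hx [hy [-> ->]]]]]|[i [j [hij [hj [-> ->]]]]]].
    rewrite /tEx; apply/orP; left; apply/andP; split.
      by case: hx => [->|/isDP ->]; rewrite ?orbT.
    by case: hy => [->|/isDP ->]; rewrite ?orbT.
  rewrite /tEx /=; lia.
rewrite /tEx; case/orP.
  case/andP => ha hb; left; exists a, b; split; [|split; last by []].
    by case: a ha => //= [_|j h]; [left|right; apply/isDP].
  by case: b hb => //= [_|j h]; [left|right; apply/isDP].
case: a => // i; case: b => // j h; right; exists i, j; split; [lia|split; [lia|by []]].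
Qed.

Lemma target0_edge a b : inEd target0 [:: a; b] <-> tE 0 a b.
Proof.
apply: cfg2_char => {}a {}b /=; split.
  by case=> -> ->.
rewrite /tEx; case: a => [||i|i]; case: b => [||j|j] //=; try lia.
Qed.

Lemma target0_lab t : plab target0 t <-> tlabb 0 t.
Proof.
rewrite /=; split; first by case=> ->.
case: t => [||i|i] /=; try lia; by [left|right].
Qed.

Definition t0x (a b c : tlab) : bool := [&& isB a, isC b & isB c || isC c].

Lemma target0_node a b c : inN target0 [:: a; b; c] <->
  [|| t0x a b c, t0x a c b, t0x b a c, t0x b c a, t0x c a b | t0x c b a].
Proof.
apply: cfg3_char => {}a {}b {}c /=; rewrite /t0x; split.
  by case=> -[-> -> ->].
by case: a => //; case: b => //; case: c => //= _; [left|right].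
Qed.

Inductive rlab := RU | RV | RX of nat | RY of nat.
Definition rlab_eq_dec (x y : rlab) : {x = y} + {x <> y}.
Proof. decide equality; apply: (decP eqP). Defined.
HB.instance Definition _ := comparableMixin rlab_eq_dec.

Definition comp (a b : rlab) : bool :=
  match a, b with
  | RY _, RY _ | RY _, RU | RY _, RV | RU, RY _ | RV, RY _ | RU, RV | RV, RU => true
  | RY i, RX l | RX l, RY i => l < i
  | _, _ => false
  end.

Lemma compC a b : comp a b = comp b a.
Proof. by case: a => [||i|i]; case: b => [||j|j]. Qed.

Definition rlabb (k : nat) (w : rlab) : bool :=
  match w with RU | RV => true | RX i | RY i => i < k end.

Definition rnx k a b c :=
  [&& rlabb k a, rlabb k b, rlabb k c & comp a b || comp a c || comp b c].

Definition rEx k (a b : rlab) : bool :=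
  (if a is RU then true else false) && (if b is RV then true else false) ||
  (match a, b with RX i, RY j => (i == j) && (i < k) | _, _ => false end).

Definition rE k a b := rEx k a b || rEx k b a.

Definition RT (k : nat) : problem rlab :=
  Problem (fun w => rlabb k w)
          (fun s => if s is [:: a; b; c] then rnx k a b c else False)
          (fun s => if s is [:: a; b] then rEx k a b else False).

Lemma rnx_perm k a b c :
  [/\ rnx k a c b = rnx k a b c, rnx k b a c = rnx k a b c, rnx k b c a = rnx k a b c,
      rnx k c a b = rnx k a b c & rnx k c b a = rnx k a b c].
Proof.
rewrite /rnx (compC b a) (compC c a) (compC c b).
by split; case: (rlabb k a); case: (rlabb k b); case: (rlabb k c);
   case: (comp a b); case: (comp a c); case: (comp b c).
Qed.

Lemma RT_node k a b c : inN (RT k) [:: a; b; c] <-> rnx k a b c.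
Proof.
have H := @cfg3_char _ (pnode (RT k)) (rnx k) (fun _ _ _ => iff_refl _) a b c.
rewrite /inN H.
have [-> -> -> -> ->] := rnx_perm k a b c.
by rewrite !orbb.
Qed.

Lemma RT_edge k a b : inEd (RT k) [:: a; b] <-> rE k a b.
Proof. exact: (@cfg2_char _ (pedge (RT k)) (rEx k) (fun _ _ => iff_refl _) a b). Qed.

Lemma RT_lab k w : plab (RT k) w <-> rlabb k w.
Proof. by []. Qed.

Lemma rnx_lab k a b c : rnx k a b c -> [/\ rlabb k a, rlabb k b & rlabb k c].
Proof. by case/and4P. Qed.

Lemma rE_lab k a b : rE k a b -> rlabb k a && rlabb k b.
Proof. by case: a => [||i|i]; case: b => [||j|j] //=; rewrite /rE /rEx /=; lia. Qed.

Lemma tN_lab k a b c : 0 < k -> tN k a b c -> [&& tlabb k a, tlabb k b & tlabb k c].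
Proof.
move=> k0.
have h : forall x y z, tNx k x y z -> [&& tlabb k x, tlabb k y & tlabb k z].
  move=> x y z; rewrite /tNx.
  case: x => [||i|i]; case: y => [||j|j]; case: z => [||l|l] //=; lia.
rewrite /tN; case/orP => [/h|/orP [/h|/orP [/h|/orP [/h|/orP [/h|/h]]]]];
  by case/and3P => -> -> ->.
Qed.

Lemma tE_lab k a b : tE k a b -> tlabb k a && tlabb k b.
Proof.
have h : forall x y, tEx k x y -> tlabb k x && tlabb k y.
  move=> x y; rewrite /tEx; case: x => [||i|i]; case: y => [||j|j] //=; lia.
by rewrite /tE; case/orP => /h //; rewrite andbC.
Qed.

Definition sgR (k : nat) (w : rlab) (t : tlab) : bool :=
  match w with
  | RU => isB t || isDb k t
  | RV => isC t || isDb k t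
  | RX i => if t is TD j then (i < j) && (j <= k) else false
  | RY i => [|| isB t, isC t, isDb k t | (if t is TA j then (0 < j) && (j <= i) else false)]
  end.

Lemma sgR_lab k w t : rlabb k w -> sgR k w t -> tlabb k t.
Proof. by case: w => [||i|i]; case: t => [||j|j] //=; lia. Qed.

Lemma sgR_ne k w : rlabb k w -> exists t, sgR k w t.
Proof.
case: w => [||i|i] /= h; [exists TB|exists TC|exists (TD k)|exists TB] => //=; lia.
Qed.

Lemma sgR_inj k w w' : rlabb k w -> rlabb k w' -> sgR k w =1 sgR k w' -> w = w'.
Proof.
move=> lw lw' e.
case: w lw e => [||i|i] lw e; case: w' lw' e => [||j|j] lw' e //;
  move: lw lw' (e TB) (e TC) (e (TD k)) => /=; try lia.
- move: (e (TD i.+1)) (e (TD j.+1)) => /= *; suff -> : i = j by []; lia.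
- move: (e (TA i)) (e (TA j)) => /= *; suff -> : i = j by []; lia.
Qed.

Lemma sgR_edge k w1 w2 a b : rEx k w1 w2 -> sgR k w1 a -> sgR k w2 b -> tE k a b.
Proof.
case: w1 => [||i|i]; case: w2 => [||j|j] //=;
  case: a => [||x|x]; case: b => [||y|y] //=; rewrite /rEx /tE /tEx /=; lia.
Qed.

Lemma sgR_compl k w1 w2 u : rEx k w1 w2 -> tlabb k u ->
  (forall a, sgR k w1 a -> tE k a u) -> sgR k w2 u.
Proof.
case: w1 => [||i|i]; case: w2 => [||j|j] //=; rewrite /rEx /= => hE lu H.
  by move: (H TB isT) lu => {H}; case: u => [||x|x] //=; rewrite /tE /tEx /=; lia.
have hi : (i < i.+1) && (i.+1 <= k) by lia.
by move: (H (TD i.+1) hi) lu => {H}; case: u => [||x|x] //=; rewrite /tE /tEx /=; lia.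
Qed.

Lemma sgR_compl' k w1 w2 u : rEx k w1 w2 -> tlabb k u ->
  (forall a, sgR k w2 a -> tE k a u) -> sgR k w1 u.
Proof.
case: w1 => [||i|i]; case: w2 => [||j|j] //=; rewrite /rEx /= => hE lu H.
  by move: (H TC isT) lu => {H}; case: u => [||x|x] //=; rewrite /tE /tEx /=; lia.
move: (H TB isT) (H TC isT) lu; case: u H => [||x|x] H //=; rewrite /tE /tEx /=; try lia.
move=> _ _ hx; case: i hE H => [|i] hE H; first lia.
by move: (H (TA i.+1)) => /=; rewrite /tE /tEx /=; lia.
Qed.

Lemma not_all_ex (A : Type) (P : A -> Prop) (b : A -> bool) :
  ~ (forall x, P x -> b x) -> exists x, P x /\ ~~ b x.
Proof.
move=> h; case: (classic (exists x, P x /\ ~~ b x)) => // h'; exfalso; apply: h => x Px.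
by apply/negPn/negP => nb; apply: h'; exists x.
Qed.

Lemma dom_allD k (A B : tlab -> Prop) : (exists b, B b) -> (forall a, A a -> tlabb k a) ->
  (forall b, B b -> isDb k b) -> (forall a b, A a -> B b -> tE k a b) ->
  exists i, [/\ i < k, (forall a, A a -> sgR k (RY i) a) & (forall b, B b -> sgR k (RX i) b)].
Proof.
move=> [b0 Bb0] lA hD AB.
have hex : exists j, pb (B (TD j)).
  by move: (hD _ Bb0); case: b0 Bb0 => // j Bj _; exists j; apply/pbP.
case: (ex_minnP hex) => j /pbP Bj jmin.
have := hD _ Bj => /= Dj.
exists j.-1; split; first lia.
  move=> a Aa; move: (AB _ _ Aa Bj) (lA _ Aa).
  by case: a {Aa} => [||x|x] //=; rewrite /tE /tEx /=; lia.
move=> b Bb; move: (hD _ Bb); case: b Bb => // l Bl /= hl.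
have := jmin l (introT (pbP _) Bl); lia.
Qed.

Lemma nonD_pair k a b : tlabb k a -> tlabb k b -> ~~ isDb k a -> ~~ isDb k b -> tE k a b ->
  (isB a && isC b) || (isC a && isB b).
Proof. by case: a => [||x|x]; case: b => [||y|y] //=; rewrite /tE /tEx /=; lia. Qed.

Lemma sgR_dom k (A B : tlab -> Prop) :
  (exists a, A a) -> (exists b, B b) -> (forall a, A a -> tlabb k a) -> (forall b, B b -> tlabb k b) ->
  (forall a b, A a -> B b -> tE k a b) ->
  exists w1 w2, [/\ rE k w1 w2, (forall a, A a -> sgR k w1 a) & (forall b, B b -> sgR k w2 b)].
Proof.
move=> nA nB lA lB AB.
case: (classic (forall b, B b -> isDb k b)) => [hD|hD].
  have [i [ik sA sB]] := dom_allD nB lA hD AB.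
  by exists (RY i), (RX i); split => //; rewrite /rE /rEx /=; lia.
case: (classic (forall a, A a -> isDb k a)) => [hD'|hD'].
  have [i [ik sB sA]] := dom_allD nA lB hD' (fun b a Bb Aa => etrans (tEC k b a) (AB a b Aa Bb)).
  by exists (RX i), (RY i); split => //; rewrite /rE /rEx /=; lia.
have [a1 [Aa1 na1]] := not_all_ex hD'.
have [b1 [Bb1 nb1]] := not_all_ex hD.
case/orP: (nonD_pair (lA _ Aa1) (lB _ Bb1) na1 nb1 (AB _ _ Aa1 Bb1)) => /andP [h1 h2].
- have eb : b1 = TC by case: b1 {Bb1 nb1} h2.
  have ea : a1 = TB by case: a1 {Aa1 na1} h1.
  exists RU, RV; split => //.
    move=> a Aa; move: (AB _ _ Aa Bb1) (lA _ Aa); rewrite eb.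
    by case: a {Aa} => [||x|x] //=; rewrite /tE /tEx /=; lia.
  move=> b Bb; move: (AB _ _ Aa1 Bb) (lB _ Bb); rewrite ea.
  by case: b {Bb} => [||x|x] //=; rewrite /tE /tEx /=; lia.
- have eb : b1 = TB by case: b1 {Bb1 nb1} h2.
  have ea : a1 = TC by case: a1 {Aa1 na1} h1.
  exists RV, RU; split => //.
    move=> a Aa; move: (AB _ _ Aa Bb1) (lA _ Aa); rewrite eb.
    by case: a {Aa} => [||x|x] //=; rewrite /tE /tEx /=; lia.
  move=> b Bb; move: (AB _ _ Aa1 Bb) (lB _ Bb); rewrite ea.
  by case: b {Bb} => [||x|x] //=; rewrite /tE /tEx /=; lia.
Qed.

Definition pairX (k : nat) (u u' : tlab) : bool :=
  (isB u && isC u') || (match u, u' with TA i, TD j => (i == j) && (0 < i) && (i < k) | _, _ => false end).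

Lemma tNx_eq k a b c : tNx k a b c = pairX k a b && isDk k c.
Proof. by rewrite /tNx /pairX; case: (isB a); case: (isC b); case: (isDk k c); case: (match a, b with TA i, TD j => _ | _, _ => false end). Qed.

Lemma tN_alt k a b c : tN k a b c =
  [|| (pairX k a b || pairX k b a) && isDk k c, (pairX k a c || pairX k c a) && isDk k b
    | (pairX k b c || pairX k c b) && isDk k a].
Proof.
rewrite /tN !tNx_eq.
by case: (pairX k a b); case: (pairX k b a); case: (pairX k a c); case: (pairX k c a);
  case: (pairX k b c); case: (pairX k c b); case: (isDk k a); case: (isDk k b); case: (isDk k c).
Qed.

Lemma pair_comp k w w' u u' : sgR k w u -> sgR k w' u' -> pairX k u u' -> comp w w'.
Proof.
rewrite /pairX; case: u => [||i|i]; case: u' => [||j|j] //=;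
  case: w => [||x|x]; case: w' => [||y|y] //=; lia.
Qed.

Lemma pairN_comp k w w' u u' : sgR k w u -> sgR k w' u' -> pairX k u u' || pairX k u' u -> comp w w'.
Proof.
move=> h h'; case/orP => p; first exact: pair_comp h h' p.
by rewrite compC; apply: pair_comp h' h p.
Qed.

Lemma comp_pair k w w' : rlabb k w -> rlabb k w' -> comp w w' ->
  exists u u', [/\ sgR k w u, sgR k w' u' & pairX k u u' || pairX k u' u].
Proof.
case: w => [||i|i]; case: w' => [||j|j] //= lw lw' c.
all: first [ (exists TB, TC; split; rewrite /pairX //=; lia)
           | (exists TC, TB; split; rewrite /pairX //=; lia)
           | (exists (TD j), (TA j); split; rewrite /pairX //=; lia)
           | (exists (TA i), (TD i); split; rewrite /pairX //=; lia) ].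
Qed.

Lemma Dk_in k w : 0 < k -> rlabb k w -> sgR k w (TD k).
Proof. by case: w => [||i|i] /=; lia. Qed.

Lemma sgR_nodechar k w1 w2 w3 : 0 < k -> rlabb k w1 -> rlabb k w2 -> rlabb k w3 ->
  (rnx k w1 w2 w3 <-> exists u1 u2 u3, [/\ sgR k w1 u1, sgR k w2 u2, sgR k w3 u3 & tN k u1 u2 u3]).
Proof.
move=> k0 l1 l2 l3; split.
  rewrite /rnx l1 l2 l3 /=; case/orP => [/orP [c|c]|c].
  - have [u [u' [s s' p]]] := comp_pair l1 l2 c.
    exists u, u', (TD k); split => //; first exact: Dk_in.
    by rewrite tN_alt p /= eqxx.
  - have [u [u' [s s' p]]] := comp_pair l1 l3 c.
    exists u, (TD k), u'; split => //; first exact: Dk_in.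
    by rewrite tN_alt p /= eqxx orbT.
  - have [u [u' [s s' p]]] := comp_pair l2 l3 c.
    exists (TD k), u, u'; split => //; first exact: Dk_in.
    by rewrite tN_alt p /= eqxx !orbT.
case=> u1 [u2 [u3 [s1 s2 s3]]]; rewrite tN_alt /rnx l1 l2 l3 /=.
case/orP => [/andP [p _]|/orP [/andP [p _]|/andP [p _]]].
- by rewrite (pairN_comp s1 s2 p).
- by rewrite (pairN_comp s1 s3 p) orbT.
- by rewrite (pairN_comp s2 s3 p) !orbT.
Qed.

Lemma sgR0_nodechar w1 w2 w3 : rlabb 0 w1 -> rlabb 0 w2 -> rlabb 0 w3 ->
  (rnx 0 w1 w2 w3 <-> exists u1 u2 u3, [/\ sgR 0 w1 u1, sgR 0 w2 u2, sgR 0 w3 u3 &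
     [|| t0x u1 u2 u3, t0x u1 u3 u2, t0x u2 u1 u3, t0x u2 u3 u1, t0x u3 u1 u2 | t0x u3 u2 u1]]).
Proof.
case: w1 => [||i|i] //; case: w2 => [||j|j] //; case: w3 => [||l|l] //= _ _ _;
  rewrite /rnx /=; split => //;
  try (by [exists TB, TC, TB | exists TB, TC, TC | exists TB, TB, TC | exists TC, TB, TB
          | exists TC, TC, TB | exists TC, TB, TC]);
  case=> u1 [u2 [u3 []]]; case: u1 => [||x|x]; case: u2 => [||y|y]; case: u3 => [||z|z] //=.
Qed.

Lemma Rstep k (T : finType) (P : problem T) (P' : problem tlab) :
  (forall t, plab P' t <-> tlabb k t) ->
  (forall a b, inEd P' [:: a; b] <-> tE k a b) ->
  (forall w1 w2 w3, rlabb k w1 -> rlabb k w2 -> rlabb k w3 ->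
     (rnx k w1 w2 w3 <-> exists u1 u2 u3,
        [/\ sgR k w1 u1, sgR k w2 u2, sgR k w3 u3 & inN P' [:: u1; u2; u3]])) ->
  iso P P' -> iso (R P) (RT k).
Proof.
move=> HL HEc HNc [f [_ [Hlab [HN [_ [HE _]]]]]].
apply: (genR (f := f) (sg := sgR k) RU Hlab HN HE).
- move=> t h; have := cfg_size h; case: t h => [|a [|b [|c [|d t]]]] //= h _.
  by move/RT_node: h => /rnx_lab [la lb lc]; apply/all_lab3.
- move=> t h; have := cfg_size h; case: t h => [|a [|b [|c t]]] //= h _.
  by move/RT_edge: h => /rE_lab /andP [la lb]; apply/all_lab2.
- exact: sgR_ne.
- by move=> w u lw su; apply/HL; apply: sgR_lab lw su.
- exact: sgR_inj.
- by move=> w1 w2 w3 l1 l2 l3; rewrite RT_node; apply: HNc.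
- move=> w1 w2 /RT_edge E a b sa sb; apply/HEc; case/orP: E => E.
    exact: sgR_edge E sa sb.
  by rewrite tEC; apply: sgR_edge E sb sa.
- move=> w1 w2 /RT_edge E u /HL lu H; case/orP: E => E.
    by apply: sgR_compl E lu _ => a sa; apply/HEc; apply: H.
  by apply: sgR_compl' E lu _ => a sa; apply/HEc; apply: H.
- move=> A B nA nB lA lB AB.
  have [w1 [w2 [E s1 s2]]] := sgR_dom nA nB (fun a h => (HL a).1 (lA a h))
     (fun a h => (HL a).1 (lB a h)) (fun a b ha hb => (HEc a b).1 (AB a b ha hb)).
  by exists w1, w2; split => //; apply/RT_edge.
- move=> w lw; case: w lw => [||i|i] lw; [exists RV|exists RU|exists (RY i)|exists (RX i)];
  apply/RT_edge; rewrite /rE /rEx /=; move: lw => /=; lia.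
Qed.

Lemma Rstep_k k (T : finType) (P : problem T) :
  0 < k -> iso P (targetk k) -> iso (R P) (RT k).
Proof.
move=> k0; apply: Rstep; [exact: targetk_lab|exact: targetk_edge|].
move=> w1 w2 w3 l1 l2 l3; rewrite sgR_nodechar //.
by split; case=> u1 [u2 [u3 [s1 s2 s3 h]]]; exists u1, u2, u3; split => //; apply/targetk_node.
Qed.

Lemma Rstep_0 (T : finType) (P : problem T) : iso P target0 -> iso (R P) (RT 0).
Proof.
apply: Rstep; [exact: target0_lab|exact: target0_edge|].
move=> w1 w2 w3 l1 l2 l3; rewrite sgR0_nodechar //.
by split; case=> u1 [u2 [u3 [s1 s2 s3 h]]]; exists u1, u2, u3; split => //; apply/target0_node.
Qed.

Definition isYb (k : nat) (w : rlab) := if w is RY j then j < k else false.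
Definition isU (w : rlab) := if w is RU then true else false.
Definition isV (w : rlab) := if w is RV then true else false.

Definition sgB (k : nat) (t : tlab) (w : rlab) : bool :=
  match t with
  | TB => isYb k w || isU w
  | TC => isYb k w || isV w
  | TA m => if w is RY j then (m.-1 <= j) && (j < k) else false
  | TD m => [|| isYb k w, isU w, isV w | if w is RX j then (j < m.-1) && (j < k) else false]
  end.

Lemma sgB_lab k t w : sgB k t w -> rlabb k w.
Proof. by case: t => [||i|i]; case: w => [||j|j] //=; lia. Qed.

Lemma sgB_ne k t : tlabb k.+1 t -> exists w, sgB k t w.
Proof.
case: t => [||i|i] /= h; [exists RU|exists RV|exists (RY k.-1)|exists RU] => //=; lia.
Qed.

Lemma sgB_inj k t t' : tlabb k.+1 t -> tlabb k.+1 t' -> sgB k t =1 sgB k t' -> t = t'.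
Proof.
move=> lt lt' e.
case: t lt e => [||i|i] lt e; case: t' lt' e => [||j|j] lt' e //;
  move: lt lt' (e RU) (e RV) => /=; try lia.
- move: (e (RY i.-1)) (e (RY j.-1)) => /= *; suff -> : i = j by []; lia.
- move: (e (RX i.-1)) (e (RX j.-1)) => /= *; suff -> : i = j by []; lia.
Qed.

Lemma all_D k c : rlabb k c -> sgB k (TD k.+1) c.
Proof. by case: c => [||j|j] /=; lia. Qed.

Lemma tEx_wit k t1 t2 : tlabb k.+1 t1 -> tlabb k.+1 t2 -> tEx k.+1 t1 t2 ->
  exists u1 u2, [/\ sgB k t1 u1, sgB k t2 u2 & rE k u1 u2].
Proof.
rewrite /tEx; case: t1 => [||i|i]; case: t2 => [||j|j] //= l1 l2 h.
all: first [ (exists RU, RV; split; rewrite /rE /rEx //=; lia)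
           | (exists (RY i.-1), (RX i.-1); split; rewrite /rE /rEx //=; lia) ].
Qed.

Lemma rE_tE k t1 t2 u1 u2 : tlabb k.+1 t1 -> tlabb k.+1 t2 -> sgB k t1 u1 -> sgB k t2 u2 ->
  rEx k u1 u2 -> tE k.+1 t1 t2.
Proof.
rewrite /rEx; case: u1 => [||i|i]; case: u2 => [||j|j] //=;
  case: t1 => [||x|x]; case: t2 => [||y|y] //=; rewrite /tE /tEx /=; lia.
Qed.

Lemma pairB_comp k t t' a b : sgB k t a -> sgB k t' b -> pairX k.+1 t t' -> comp a b.
Proof.
rewrite /pairX; case: t => [||i|i]; case: t' => [||j|j] //=;
  case: a => [||x|x]; case: b => [||y|y] //=; lia.
Qed.

Lemma pairNB_comp k t t' a b : sgB k t a -> sgB k t' b ->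
  pairX k.+1 t t' || pairX k.+1 t' t -> comp a b.
Proof.
move=> h h'; case/orP => p; first exact: pairB_comp h h' p.
by rewrite compC; apply: pairB_comp h' h p.
Qed.

Lemma tN_perm k a b c : tN k a c b = tN k a b c /\ tN k b a c = tN k a b c.
Proof.
rewrite /tN; split;
by case: (tNx k a b c); case: (tNx k a c b); case: (tNx k b a c); case: (tNx k b c a);
   case: (tNx k c a b); case: (tNx k c b a).
Qed.

Lemma compl_core k t t' u : pairX k.+1 t t' || pairX k.+1 t' t -> rlabb k u ->
  (forall a b, sgB k t a -> sgB k (TD k.+1) b -> rnx k a b u) -> sgB k t' u.
Proof.
rewrite /pairX; case: t => [||i|i]; case: t' => [||j|j] //= p lu H.
- by move: (H RU RU isT isT) lu => {H}; rewrite /rnx; case: u => [||x|x] //=; lia.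
- by move: (H RV RV isT isT) lu => {H}; rewrite /rnx; case: u => [||x|x] //=; lia.
- have h1 : sgB k (TA i) (RY i.-1) by rewrite /=; lia.
  have h2 : sgB k (TD k.+1) (RX k.-1) by rewrite /=; lia.
  have e : j = i by lia; subst j.
  by move: (H (RY i.-1) (RX k.-1) h1 h2) lu => {H}; rewrite /rnx; case: u => [||x|x] //=; lia.
- have h2 : sgB k (TD k.+1) (RX k.-1) by rewrite /=; lia.
  have e : j = i by lia; rewrite e.
  have hU := H RU (RX k.-1) isT h2; have hV := H RV (RX k.-1) isT h2.
  case: (ltnP 1 i) => hi.
    have h3 : sgB k (TD i) (RX i.-2) by rewrite /=; lia.
    move: (H (RX i.-2) (RX k.-1) h3 h2) hU hV lu; rewrite /rnx.
    by case: u {H} => [||x|x] //=; lia.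
  move: hU hV lu; rewrite /rnx.
  by case: u {H} => [||x|x] //=; lia.
Qed.

Lemma domY k (A B C : rlab -> Prop) : (exists a, A a) ->
  (forall b, B b -> rlabb k b) -> (forall c, C c -> rlabb k c) ->
  (forall a, A a -> isYb k a) -> (forall a b c, A a -> B b -> C c -> rnx k a b c) ->
  exists j, [/\ j < k, (forall a, A a -> sgB k (TA j.+1) a) &
     (forall b, B b -> sgB k (TD j.+1) b) \/ (forall c, C c -> sgB k (TD j.+1) c)].
Proof.
move=> [a0 Aa0] lB lC hY H.
have hex : exists j, pb (A (RY j)).
  by move: (hY _ Aa0); case: a0 Aa0 => // j Aj _; exists j; apply/pbP.
case: (ex_minnP hex) => j /pbP Aj jmin.
have jk : j < k := hY _ Aj.
exists j; split => //.
  move=> a Aa; move: (hY _ Aa); case: a Aa => // x Ax /= hx.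
  have := jmin x (introT (pbP _) Ax); lia.
case: (classic (forall l, B (RX l) -> l < j)) => [hB|hB].
  left => b Bb; move: (lB _ Bb); case: b Bb => [||x|x] Bb //=; try lia.
  move: (hB _ Bb); lia.
right => c Cc.
have [l [Bl nl]] := not_all_ex (P := fun l => B (RX l)) (b := fun l => l < j) hB.
move: (H _ _ _ Aj Bl Cc) (lC _ Cc) nl; rewrite /rnx; case: c Cc => [||x|x] Cc //=; lia.
Qed.

Lemma nonY_comp k a b l : rlabb k a -> rlabb k b -> ~~ isYb k a -> ~~ isYb k b ->
  rnx k a b (RX l) -> (isU a && isV b) || (isV a && isU b).
Proof. by case: a => [||x|x]; case: b => [||y|y]; rewrite /rnx /=; lia. Qed.

Lemma domX k (A B C : rlab -> Prop) : (exists a, A a /\ ~~ isYb k a) ->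
  (exists b, B b /\ ~~ isYb k b) -> (exists l, C (RX l)) ->
  (forall a, A a -> rlabb k a) -> (forall b, B b -> rlabb k b) ->
  (forall a b c, A a -> B b -> C c -> rnx k a b c) ->
  ((forall a, A a -> sgB k TB a) /\ (forall b, B b -> sgB k TC b)) \/
  ((forall a, A a -> sgB k TC a) /\ (forall b, B b -> sgB k TB b)).
Proof.
move=> [a0 [Aa0 na0]] [b0 [Bb0 nb0]] [l Cl] lA lB H.
have key : forall a b, A a -> B b -> ~~ isYb k a -> ~~ isYb k b ->
    (isU a && isV b) || (isV a && isU b).
  by move=> a b Aa Bb na nb; apply: nonY_comp (lA _ Aa) (lB _ Bb) na nb (H _ _ _ Aa Bb Cl).
case/orP: (key _ _ Aa0 Bb0 na0 nb0) => /andP [h1 h2]; [left|right]; split.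
- move=> a Aa; case: (boolP (isYb k a)) => ya; first by rewrite /= ya.
  move: (key _ _ Aa Bb0 ya nb0) h2; case: a {Aa ya} => [||x|x]; case: b0 {Bb0 nb0} => [||y|y] //=.
- move=> b Bb; case: (boolP (isYb k b)) => yb; first by rewrite /= yb.
  move: (key _ _ Aa0 Bb na0 yb) h1; case: b {Bb yb} => [||x|x]; case: a0 {Aa0 na0} => [||y|y] //=.
- move=> a Aa; case: (boolP (isYb k a)) => ya; first by rewrite /= ya.
  move: (key _ _ Aa Bb0 ya nb0) h2; case: a {Aa ya} => [||x|x]; case: b0 {Bb0 nb0} => [||y|y] //=.
- move=> b Bb; case: (boolP (isYb k b)) => yb; first by rewrite /= yb.
  move: (key _ _ Aa0 Bb na0 yb) h1; case: b {Bb yb} => [||x|x]; case: a0 {Aa0 na0} => [||y|y] //=.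
Qed.

Lemma subTB k (S : rlab -> Prop) : (forall x, S x -> rlabb k x) -> (forall l, ~ S (RX l)) ->
  ~ S RV -> forall x, S x -> sgB k TB x.
Proof.
move=> lS nX nV x Sx; move: (lS _ Sx); case: x Sx => [||j|j] Sx //=;
  try (by case: (nV Sx)); try (by case: (nX _ Sx)); lia.
Qed.

Lemma subTC k (S : rlab -> Prop) : (forall x, S x -> rlabb k x) -> (forall l, ~ S (RX l)) ->
  ~ S RU -> forall x, S x -> sgB k TC x.
Proof.
move=> lS nX nU x Sx; move: (lS _ Sx); case: x Sx => [||j|j] Sx //=;
  try (by case: (nU Sx)); try (by case: (nX _ Sx)); lia.
Qed.

Lemma nonY_has k (S : rlab -> Prop) : (exists x, S x /\ ~~ isYb k x) ->
  (forall l, ~ S (RX l)) -> (forall x, S x -> rlabb k x) -> S RU \/ S RV.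
Proof.
move=> [x [Sx nx]] nX lS; move: (lS _ Sx) nx; case: x Sx => [||j|j] Sx //=;
  try (by left); try (by right); try (by case: (nX _ Sx)); lia.
Qed.

Lemma tN_BC k :
  [/\ tN k.+1 TB TC (TD k.+1), tN k.+1 TB (TD k.+1) TC & tN k.+1 TC TB (TD k.+1)] /\
  [/\ tN k.+1 TC (TD k.+1) TB, tN k.+1 (TD k.+1) TB TC & tN k.+1 (TD k.+1) TC TB].
Proof. by rewrite /tN /tNx /=; split; split; lia. Qed.

Lemma tN_AD k j : j < k ->
  [/\ tN k.+1 (TA j.+1) (TD j.+1) (TD k.+1), tN k.+1 (TA j.+1) (TD k.+1) (TD j.+1)
      & tN k.+1 (TD j.+1) (TA j.+1) (TD k.+1)] /\
  [/\ tN k.+1 (TD j.+1) (TD k.+1) (TA j.+1),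
      tN k.+1 (TD k.+1) (TA j.+1) (TD j.+1) & tN k.+1 (TD k.+1) (TD j.+1) (TA j.+1)].
Proof. by move=> jk; rewrite /tN /tNx /=; split; split; lia. Qed.

Lemma domUV k (A B C : rlab -> Prop) : (exists a, A a /\ ~~ isYb k a) ->
  (exists b, B b /\ ~~ isYb k b) -> (exists c, C c /\ ~~ isYb k c) ->
  (forall l, ~ A (RX l)) -> (forall l, ~ B (RX l)) -> (forall l, ~ C (RX l)) ->
  (forall a, A a -> rlabb k a) -> (forall b, B b -> rlabb k b) -> (forall c, C c -> rlabb k c) ->
  (forall a b c, A a -> B b -> C c -> rnx k a b c) ->
  exists t1 t2 t3, [/\ tN k.+1 t1 t2 t3, (forall a, A a -> sgB k t1 a),
     (forall b, B b -> sgB k t2 b) & (forall c, C c -> sgB k t3 c)].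
Proof.
move=> nA nB nC xA xB xC lA lB lC H.
have [[c1 c2 c3] [c4 c5 c6]] := tN_BC k.
have dA := fun a (h : A a) => all_D (lA a h).
have dB := fun a (h : B a) => all_D (lB a h).
have dC := fun a (h : C a) => all_D (lC a h).
have hU : ~ A RU \/ ~ B RU \/ ~ C RU.
  case: (classic (A RU)) => a; last by left.
  case: (classic (B RU)) => b; last by right; left.
  case: (classic (C RU)) => c; last by right; right.
  by move: (H _ _ _ a b c); rewrite /rnx.
have hV : ~ A RV \/ ~ B RV \/ ~ C RV.
  case: (classic (A RV)) => a; last by left.
  case: (classic (B RV)) => b; last by right; left.
  case: (classic (C RV)) => c; last by right; right.
  by move: (H _ _ _ a b c); rewrite /rnx.
have hA := nonY_has nA xA lA; have hB := nonY_has nB xB lB; have hC := nonY_has nC xC lC.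
case: hU => [uA|[uB|uC]]; case: hV => [vA|[vB|vC]].
- by case: hA.
- by exists TC, TB, (TD k.+1); split => //; [apply: subTC uA|apply: subTB vB].
- by exists TC, (TD k.+1), TB; split => //; [apply: subTC uA|apply: subTB vC].
- by exists TB, TC, (TD k.+1); split => //; [apply: subTB vA|apply: subTC uB].
- by case: hB.
- by exists (TD k.+1), TC, TB; split => //; [apply: subTC uB|apply: subTB vC].
- by exists TB, (TD k.+1), TC; split => //; [apply: subTB vA|apply: subTC uC].
- by exists (TD k.+1), TB, TC; split => //; [apply: subTB vB|apply: subTC uC].
- by case: hC.
Qed.

Lemma ex_nonY k (S : rlab -> Prop) : ~ (forall x, S x -> isYb k x) -> exists x, S x /\ ~~ isYb k x.
Proof. exact: not_all_ex. Qed.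

Lemma sgB_dom k (A B C : rlab -> Prop) : (exists a, A a) -> (exists b, B b) -> (exists c, C c) ->
  (forall a, A a -> rlabb k a) -> (forall b, B b -> rlabb k b) -> (forall c, C c -> rlabb k c) ->
  (forall a b c, A a -> B b -> C c -> rnx k a b c) ->
  exists t1 t2 t3, [/\ tN k.+1 t1 t2 t3, (forall a, A a -> sgB k t1 a),
     (forall b, B b -> sgB k t2 b) & (forall c, C c -> sgB k t3 c)].
Proof.
move=> nA nB nC lA lB lC H.
have dA := fun a (h : A a) => all_D (lA a h).
have dB := fun a (h : B a) => all_D (lB a h).
have dC := fun a (h : C a) => all_D (lC a h).
have [[c1 c2 c3] [c4 c5 c6]] := tN_BC k.
case: (classic (forall a, A a -> isYb k a)) => [yA|yA].
  have [j [jk sA [sB|sC]]] := domY nA lB lC yA H; have [[e1 e2 e3] [e4 e5 e6]] := tN_AD jk.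
    by exists (TA j.+1), (TD j.+1), (TD k.+1).
  by exists (TA j.+1), (TD k.+1), (TD j.+1).
case: (classic (forall b, B b -> isYb k b)) => [yB|yB].
  have H' : forall b a c, B b -> A a -> C c -> rnx k b a c.
    by move=> b a c hb ha hc; have [_ -> _ _ _] := rnx_perm k a b c; apply: H.
  have [j [jk sB [sA|sC]]] := domY nB lA lC yB H'; have [[e1 e2 e3] [e4 e5 e6]] := tN_AD jk.
    by exists (TD j.+1), (TA j.+1), (TD k.+1).
  by exists (TD k.+1), (TA j.+1), (TD j.+1).
case: (classic (forall c, C c -> isYb k c)) => [yC|yC].
  have H' : forall c a b, C c -> A a -> B b -> rnx k c a b.
    by move=> c a b hc ha hb; have [_ _ _ -> _] := rnx_perm k a b c; apply: H.
  have [j [jk sC [sA|sB]]] := domY nC lA lB yC H'; have [[e1 e2 e3] [e4 e5 e6]] := tN_AD jk.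
    by exists (TD j.+1), (TD k.+1), (TA j.+1).
  by exists (TD k.+1), (TD j.+1), (TA j.+1).
have nA' := ex_nonY yA; have nB' := ex_nonY yB; have nC' := ex_nonY yC.
case: (classic (exists l, C (RX l))) => [xC|xC].
  case: (domX nA' nB' xC lA lB H) => [[sA sB]|[sA sB]].
    by exists TB, TC, (TD k.+1).
  by exists TC, TB, (TD k.+1).
case: (classic (exists l, A (RX l))) => [xA|xA].
  have H' : forall b c a, B b -> C c -> A a -> rnx k b c a.
    by move=> b c a hb hc ha; have [_ _ -> _ _] := rnx_perm k a b c; apply: H.
  case: (domX nB' nC' xA lB lC H') => [[sB sC]|[sB sC]].
    by exists (TD k.+1), TB, TC.
  by exists (TD k.+1), TC, TB.
case: (classic (exists l, B (RX l))) => [xB|xB].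
  have H' : forall a c b, A a -> C c -> B b -> rnx k a c b.
    by move=> a c b ha hc hb; have [-> _ _ _ _] := rnx_perm k a b c; apply: H.
  case: (domX nA' nC' xB lA lC H') => [[sA sC]|[sA sC]].
    by exists TB, (TD k.+1), TC.
  by exists TC, (TD k.+1), TB.
apply: domUV nA' nB' nC' _ _ _ lA lB lC H.
- by move=> l h; apply: xA; exists l.
- by move=> l h; apply: xB; exists l.
- by move=> l h; apply: xC; exists l.
Qed.

Lemma isDk_eq k t : isDk k t -> t = TD k.
Proof. by case: t => // j /eqP ->. Qed.

Lemma Rbstep k (T : finType) (P : problem T) : iso P (RT k) -> iso (Rbar P) (targetk k.+1).
Proof.
move=> [f [_ [Hlab [HN [_ [HE _]]]]]].
apply: (genRb (f := f) (sg := sgB k) TB Hlab HN HE).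
- move=> t h; have := cfg_size h; case: t h => [|a [|b [|c [|d t]]]] //= h _.
  move/targetk_node: h => h; case/and3P: (tN_lab (ltn0Sn k) h) => la lb lc.
  by apply/all_lab3; split; apply/targetk_lab.
- move=> t h; have := cfg_size h; case: t h => [|a [|b [|c t]]] //= h _.
  move/targetk_edge: h => /tE_lab /andP [la lb].
  by apply/all_lab2; split; apply/targetk_lab.
- by move=> w /targetk_lab; apply: sgB_ne.
- by move=> w u _; apply: sgB_lab.
- by move=> w w' /targetk_lab l /targetk_lab l'; apply: sgB_inj.
- move=> t1 t2 /targetk_lab l1 /targetk_lab l2; rewrite targetk_edge; split.
    case/orP => h.
      have [u1 [u2 [s1 s2 e]]] := tEx_wit l1 l2 h.
      by exists u1, u2; split => //; apply/RT_edge.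
    have [u2 [u1 [s2 s1 e]]] := tEx_wit l2 l1 h.
    by exists u1, u2; split => //; apply/RT_edge; rewrite /rE orbC.
  case=> u1 [u2 [s1 s2 /RT_edge e]]; case/orP: e => e.
    exact: rE_tE l1 l2 s1 s2 e.
  by rewrite tEC; apply: rE_tE l2 l1 s2 s1 e.
- move=> t1 t2 t3 /targetk_node h a b c sa sb sc; apply/RT_node.
  rewrite /rnx (sgB_lab sa) (sgB_lab sb) (sgB_lab sc) /=.
  move: h; rewrite tN_alt; case/orP => [/andP [p _]|/orP [/andP [p _]|/andP [p _]]].
  + by rewrite (pairNB_comp sa sb p).
  + by rewrite (pairNB_comp sa sc p) orbT.
  + by rewrite (pairNB_comp sb sc p) !orbT.
- move=> t1 t2 t3 /targetk_node h u lu H.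
  have H' : forall a b, sgB k t1 a -> sgB k t2 b -> rnx k a b u.
    by move=> a b sa sb; apply/RT_node; apply: H.
  move: h; rewrite tN_alt; case/orP => [/andP [p /isDk_eq ->]|/orP [/andP [p /isDk_eq e]|/andP [p /isDk_eq e]]].
  + exact: all_D.
  + by subst t2; apply: compl_core p lu H'.
  + subst t1; apply: compl_core p lu _ => a b sa sb.
    by have [_ -> _ _ _] := rnx_perm k b a u; apply: H' sb sa.
- move=> A B C nA nB nC lA lB lC H.
  have [t1 [t2 [t3 [h s1 s2 s3]]]] := sgB_dom nA nB nC lA lB lC
     (fun a b c ha hb hc => (RT_node k a b c).1 (H a b c ha hb hc)).
  by exists t1, t2, t3; split => //; apply/targetk_node.
- move=> t /targetk_lab lt; have [[c1 c2 c3] [c4 c5 c6]] := tN_BC k.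
  case: t lt => [||i|i] /= lt.
  + by exists TC, (TD k.+1); apply/targetk_node.
  + by exists TB, (TD k.+1); apply/targetk_node.
  + have jk : i.-1 < k by lia.
    have [[e1 e2 e3] [e4 e5 e6]] := tN_AD jk.
    have ei : i.-1.+1 = i by lia.
    by exists (TD i), (TD k.+1); apply/targetk_node; rewrite -ei.
  + case: (ltnP i k.+1) => hi.
      have jk : i.-1 < k by lia.
      have [[e1 e2 e3] [e4 e5 e6]] := tN_AD jk.
      have ei : i.-1.+1 = i by lia.
      by exists (TA i), (TD k.+1); apply/targetk_node; rewrite -ei.
    have -> : i = k.+1 by lia.
    by exists TB, TC; apply/targetk_node.
Qed.

Lemma cfg_ext (U : eqType) n (C1 C2 : seq U -> Prop) :
  (forall s, C1 s <-> C2 s) -> forall s, cfg n C1 s <-> cfg n C2 s.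
Proof.
move=> h s; split; case=> sz [s' [p c]]; split => //; exists s'; split => //; exact/h.
Qed.

Lemma iso_ext (T U : eqType) (P : problem T) (P1 P2 : problem U) :
  (forall x, plab P1 x <-> plab P2 x) -> (forall s, inN P1 s <-> inN P2 s) ->
  (forall s, inEd P1 s <-> inEd P2 s) -> iso P P1 -> iso P P2.
Proof.
move=> hl hn he [f [i [l [n [n' [e e']]]]]].
have al : forall t, all_lab P1 t <-> all_lab P2 t.
  by move=> t; split => h x /h /hl.
exists f; split => //; split.
  by move=> y; rewrite -hl.
split; first by move=> s; rewrite -hn.
split; first by move=> t /hn /n' /al.
split; first by move=> s; rewrite -he.
by move=> t /he /e' /al.
Qed.

Lemma iso_target1 (T : eqType) (P : problem T) : iso P (targetk 1) -> iso P target1.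
Proof.
apply: iso_ext.
- move=> x /=; split.
    case=> [->|[->|[[i [hi ->]]|[j [hj ->]]]]]; try by [left|right; left].
      lia.
    by right; right; have -> : j = 1 by lia.
  case=> [->|[->|->]]; [by left|by right; left|right; right; right; by exists 1].
- apply: cfg_ext => s /=; split; [by case=> // -[i [hi _]]; lia|by left].
- apply: cfg_ext => s /=; split.
    case=> [[x [y [hx [hy ->]]]]|[i [j [hij [hj _]]]]]; last lia.
    exists x, y; split; [|split; last by []].
      by case: hx => [->|[j [hj ->]]]; [left|right; have -> : j = 1 by lia].
    by case: hy => [->|[j [hj ->]]]; [left|right; have -> : j = 1 by lia].
  case=> x [y [hx [hy ->]]]; left; exists x, y; split; [|split; last by []].
    by case: hx => [->|->]; [left|right; exists 1].
  by case: hy => [->|->]; [left|right; exists 1].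
Qed.

Definition f0 (b : bool) : tlab := if b then TC else TB.

Lemma Pi0_node a b c : inN Pi0 [:: a; b; c] <-> (lI \in [:: a; b; c]) && (lO \in [:: a; b; c]).
Proof.
split.
  case=> _ [s' [p [_ [h1 h2]]]]; by rewrite !(perm_mem p) h1 h2.
case/andP => h1 h2; split => //; exists [:: a; b; c]; split => //.
Qed.

Lemma Pi0_edge a b : inEd Pi0 [:: a; b] <-> (~~ a && b) || (~~ b && a).
Proof.
apply: (@cfg2_char _ (pedge Pi0) (fun a b => ~~ a && b)) => {}a {}b /=.
by case: a; case: b.
Qed.

Lemma Pi0_iso : iso Pi0 target0.
Proof.
exists f0; split.
  by case; case.
split.
  move=> y /=; split.
    by case=> ->; [exists false; split; [left|]|exists true; split; [right|]].
  by case=> x [_ <-]; case: x; [right|left].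
have allb : forall s : seq bool, all_lab Pi0 s.
  by move=> s x _ /=; case: x; [right|left].
split.
  move=> s; split.
    move=> h; have := cfg_size h; case: s h => [|a [|b [|c [|d s]]]] //= h _.
    split; first exact: allb.
    move/Pi0_node: h; rewrite target0_node.
    by case: a; case: b; case: c.
  case=> _ h; have := cfg_size h; rewrite size_map.
  case: s h => [|a [|b [|c [|d s]]]] //= h _.
  apply/Pi0_node; move/target0_node: h.
  by case: a; case: b; case: c.
split.
  move=> t h; have := cfg_size h; case: t h => [|a [|b [|c [|d t]]]] //= h _.
  move/target0_node: h; rewrite /t0x.
  by case: a => [||i|i]; case: b => [||j|j]; case: c => [||l|l] //= _ x;
     rewrite !inE; case: x => [||?|?] //= _; by [left|right].
split.
  move=> s; split.
    move=> h; have := cfg_size h; case: s h => [|a [|b [|c s]]] //= h _.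
    split; first exact: allb.
    move/Pi0_edge: h; rewrite target0_edge /tE /tEx.
    by case: a; case: b.
  case=> _ h; have := cfg_size h; rewrite size_map.
  case: s h => [|a [|b [|c s]]] //= h _.
  apply/Pi0_edge; move/target0_edge: h; rewrite /tE /tEx.
  by case: a; case: b.
move=> t h; have := cfg_size h; case: t h => [|a [|b [|c t]]] //= h _.
move/target0_edge: h => /tE_lab.
case: a => [||i|i]; case: b => [||j|j] /= h x; try (exfalso; lia);
  rewrite !inE; case: x => [||?|?] //= _; by [left|right].
Qed.

Lemma main_succ k : iso (Qk k.+1) (targetk k.+1).
Proof.
elim: k => [|k IH].
  apply: Rbstep; apply: Rstep_0; exact: Pi0_iso.
apply: Rbstep; apply: Rstep_k => //.
Qed.

Theorem mainTheorem16 (k : nat) : iso (Qk k) (target k).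
Proof.
case: k => [|[|k]].
- exact: Pi0_iso.
- apply: iso_target1; exact: main_succ 0.
- exact: main_succ k.+1.
Qed.
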